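(* Let $1\le k\le n$, let $A\in\mathbb{R}^{n\times n}$, and consider $f(Q)=\langle A,Q\rangle=\operatorname{tr}(A^{\mathsf T}Q)$ on $\mathrm{Gr}(k,n)=\{Q\in\mathrm{O}(n): Q^{\mathsf T}=Q,\ \operatorname{tr}(Q)=2k-n\}$, equipped with the Riemannian metric $\langle X,Y\rangle_Q=\operatorname{tr}(XY)$ on tangent spaces. Then the Riemannian gradient of $f$ is \[ \nabla f(Q)=\tfrac14\big(A+A^{\mathsf T}-QAQ-QA^{\mathsf T}Q\big). \] Let $(A+A^{\mathsf T})/2=U\Lambda U^{\mathsf T}$ be an eigendecomposition with $U\in\mathrm{O}(n)$, $\Lambda=\operatorname{diag}(\lambda_1,\dots,\lambda_n)$, $\lambda_1\ge\cdots\ge\lambda_n$. Then $Q^*=UI_{k,n-k}U^{\mathsf T}$ is a maximizer of $f$ over $\mathrm{Gr}(k,n)$, and for every $Q\in\mathrm{Gr}(k,n)$, \[ 2\|\Lambda\|\,(f(Q^* )-f(Q))\ \ge\ \|\nabla f(Q)\|^2 . \]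
   Context: $I_{k,n-k}=\operatorname{diag}(I_k,-I_{n-k})$. The tangent space of $\mathrm{Gr}(k,n)$ at $Q$ is $\{X\in\mathbb{R}^{n\times n}:X^{\mathsf T}=X,\ XQ+QX=0\}$. $\|\nabla f(Q)\|$ is the Frobenius norm and $\|\Lambda\|$ is the spectral (operator) norm of $\Lambda$. *)

(* Defs.v *)
From HB Require Import structures.
From mathcomp Require Import all_boot all_order all_algebra.
From mathcomp Require Import classical_sets reals.
Set Implicit Arguments. Unset Strict Implicit. Unset Printing Implicit Defensive.
Import Order.TTheory GRing.Theory Num.Theory.
Local Open Scope ring_scope.
Local Open Scope classical_set_scope.

Section Defs.
Variable R : realType.
Variable n : nat.

Definition orthogonal_mx (Q : 'M[R]_n) : Prop := Q^T *m Q = 1%:M.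

Definition in_Gr (k : nat) (Q : 'M[R]_n) : Prop :=
  [/\ orthogonal_mx Q, Q^T = Q & \tr Q = (2 * k)%:R - n%:R].

Definition tangent_Gr (Q X : 'M[R]_n) : Prop := X^T = X /\ X *m Q + Q *m X = 0.

Definition fA (A Q : 'M[R]_n) : R := \tr (A^T *m Q).

(* Riemannian gradient of f at Q for metric <X,Y>_Q = tr(XY): the tangent
   vector G with <G,X>_Q = Df(Q)[X] = tr(A^T X) for all tangent X
   (f is the restriction of the linear map Q |-> tr(A^T Q)). *)
Definition is_riem_grad (A Q G : 'M[R]_n) : Prop :=
  tangent_Gr Q G /\ forall X, tangent_Gr Q X -> \tr (G *m X) = \tr (A^T *m X).

Definition Ikn (k : nat) : 'M[R]_n :=
  diag_mx (\row_(i < n) (if (i < k)%N then 1 else -1 : R)).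

Definition vnorm (x : 'cV[R]_n) : R := Num.sqrt (\sum_i x i 0 ^+ 2).

Definition spec_norm (M : 'M[R]_n) : R :=
  sup [set r : R | exists x : 'cV[R]_n, vnorm x <= 1 /\ r = vnorm (M *m x)].

Definition frob_norm (M : 'M[R]_n) : R := Num.sqrt (\sum_i \sum_j M i j ^+ 2).

End Defs.

(* Main.v *)
Require Import Defs.
From HB Require Import structures.
From mathcomp Require Import all_boot all_order all_algebra.
From mathcomp Require Import classical_sets reals ring lra.
Import Order.TTheory GRing.Theory Num.Theory.
Local Open Scope ring_scope.
Set Implicit Arguments. Unset Strict Implicit.
Section Core.
Variable R : realType.
Variable n k : nat.
Variable lam : 'I_n -> R.
Variable M : 'M[R]_n.
Variable s : R.
Hypothesis hk : (1 <= k <= n)%N.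
Hypothesis hsort : forall i j : 'I_n, (i <= j)%N -> lam j <= lam i.
Hypothesis hs : forall i, `|lam i| <= s.
Hypothesis hrow : forall i, \sum_j M i j ^+ 2 = 1.
Hypothesis hcol : forall j, \sum_i M i j ^+ 2 = 1.
Let d (i : 'I_n) : R := if (i < k)%N then 1 else -1.
Hypothesis htr : \sum_i d i = \sum_i M i i.

Lemma diag_le1 (i : 'I_n) : M i i ^+ 2 <= 1.
Proof.
rewrite -(hrow i) (bigD1 i) //= lerDl; apply: sumr_ge0 => j _; exact: sqr_ge0.
Qed.

Let kk : 'I_n.
Proof. apply: (@Ordinal n k.-1); case/andP: hk => h1 h2; rewrite prednK //. Defined.
Let c := lam kk.
Let mu i := lam i - c.

Lemma mu_sign (i : 'I_n) : if (i < k)%N then 0 <= mu i else mu i <= 0.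
Proof.
rewrite /mu /c; case: ifP => hi.
  rewrite subr_ge0; apply: hsort => /=; case/andP: hk => h1 h2.
  by rewrite -ltnS prednK.
rewrite subr_le0; apply: hsort => /=; case/andP: hk => h1 h2.
by apply: leq_trans (leq_pred k) _; rewrite leqNgt hi.
Qed.

Lemma term_bound (i : 'I_n) : 0 <= mu i * (d i - M i i) /\
   `|mu i| * (1 - M i i ^+ 2) <= 2 * (mu i * (d i - M i i)).
Proof.
have h1 := diag_le1 i; have := mu_sign i; rewrite /d; case: ifP => _ hm.
  rewrite ger0_norm //.
  have hx : M i i <= 1 by nra.
  have := mulr_ge0 hm (sqr_ge0 (1 - M i i)).
  split; nra.
rewrite ler0_norm //.
have hx : -1 <= M i i by nra.
have hm2 : 0 <= - mu i by rewrite oppr_ge0.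
have := mulr_ge0 hm2 (sqr_ge0 (1 + M i i)).
split; nra.
Qed.

Lemma gap_shift : \sum_i lam i * (d i - M i i) = \sum_i mu i * (d i - M i i).
Proof.
rewrite /mu; under [RHS]eq_bigr => i _ do rewrite mulrBl.
rewrite sumrB -mulr_sumr sumrB htr subrr mulr0 subr0 //.
Qed.

Lemma gap_ge0 : 0 <= \sum_i lam i * (d i - M i i).
Proof. rewrite gap_shift; apply: sumr_ge0 => i _; exact: (term_bound i).1. Qed.

Lemma core_bound :
  \sum_i \sum_j (lam i * M i j - M i j * lam j) ^+ 2 <=
  8 * s * \sum_i lam i * (d i - M i i).
Proof.
have s0 : 0 <= s by apply: le_trans (normr_ge0 _) (hs kk).
pose h i j := 2 * s * ((`|mu i| + `|mu j|) * M i j ^+ 2).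
have step1 : forall i, \sum_j (lam i * M i j - M i j * lam j) ^+ 2 <= \sum_j h i j - h i i.
  move=> i; rewrite (bigD1 i) //= [X in _ <= X - _](bigD1 i) //= [X in _ <= X]addrAC subrr add0r.
  rewrite [lam i * _]mulrC subrr expr0n add0r.
  apply: ler_sum => j _.
  have e : lam i * M i j - M i j * lam j = (mu i - mu j) * M i j by rewrite /mu; ring.
  rewrite e exprMn /h [X in _ <= X]mulrA; apply: ler_wpM2r; first exact: sqr_ge0.
  have a1 : `|mu i - mu j| <= `|mu i| + `|mu j| by apply: ler_normB.
  have a2 : `|mu i - mu j| <= 2 * s.
    have -> : mu i - mu j = lam i - lam j by rewrite /mu; ring.
    apply: le_trans (ler_normB _ _) _; have := hs i; have := hs j; lra.
  rewrite -real_normK ?num_real //.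
  have a0 := normr_ge0 (mu i - mu j); nra.
have E1a : \sum_i \sum_j `|mu i| * M i j ^+ 2 = \sum_i `|mu i|.
  by apply: eq_bigr => i _; rewrite -mulr_sumr hrow mulr1.
have E1b : \sum_i \sum_j `|mu j| * M i j ^+ 2 = \sum_j `|mu j|.
  by rewrite exchange_big; apply: eq_bigr => j _; rewrite -mulr_sumr hcol mulr1.
have E1 : \sum_i \sum_j h i j = 2 * s * (\sum_i \sum_j `|mu i| * M i j ^+ 2 + \sum_i \sum_j `|mu j| * M i j ^+ 2).
  rewrite -big_split /= mulr_sumr; apply: eq_bigr => i _.
  rewrite -big_split /= mulr_sumr; apply: eq_bigr => j _; rewrite /h; rewrite /h; ring.
apply: le_trans (ler_sum _ (fun i _ => step1 i)) _.
rewrite sumrB E1 E1a E1b gap_shift.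
have E2 : 2 * s * (\sum_i `|mu i| + \sum_i `|mu i|) - \sum_i h i i = \sum_i (4 * s) * (`|mu i| * (1 - M i i ^+ 2)).
  by rewrite /h -big_split /= mulr_sumr -sumrB; apply: eq_bigr => i _; ring.
rewrite E2 mulr_sumr; apply: ler_sum => i _.
have := (term_bound i).2; move=> hb.
have hb2 : 0 <= 2 * (mu i * (d i - M i i)) - `|mu i| * (1 - M i i ^+ 2) by rewrite subr_ge0.
have := mulr_ge0 s0 hb2.
nra.
Qed.
End Core.
Section Mat.
Variable R : realType.
Variable n : nat.
Implicit Types A B Q G X U D M : 'M[R]_n.

Lemma frob_sq X : \sum_i \sum_j X i j ^+ 2 = \tr (X *m X^T).
Proof.
rewrite /mxtrace; apply: eq_bigr => i _; rewrite !mxE; apply: eq_bigr => j _.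
by rewrite mxE expr2.
Qed.

Lemma frob_norm_sq X : frob_norm X ^+ 2 = \tr (X *m X^T).
Proof.
rewrite /frob_norm sqr_sqrtr; first exact: frob_sq.
by apply: sumr_ge0 => i _; apply: sumr_ge0 => j _; apply: sqr_ge0.
Qed.

Lemma tr_zero X : \tr (X *m X^T) = 0 -> X = 0.
Proof.
rewrite -frob_sq => h; apply/matrixP => i j; rewrite mxE.
have h1 := psumr_eq0P (fun i _ => sumr_ge0 _ (fun j _ => sqr_ge0 (X i j))) h.
have h2 := psumr_eq0P (fun j _ => sqr_ge0 (X i j)) (h1 i isT).
by apply/eqP; rewrite -sqrf_eq0 h2.
Qed.

Lemma tr_symQ A Q : Q^T = Q -> \tr (A *m Q) = \tr (A^T *m Q).
Proof. by move=> hQ; rewrite -mxtrace_tr trmx_mul hQ mxtrace_mulC. Qed.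

Lemma grad_ok A Q : Q^T = Q -> Q *m Q = 1%:M ->
  is_riem_grad A Q (4%:R^-1 *: (A + A^T - Q *m A *m Q - Q *m A^T *m Q)).
Proof.
move=> hQ hQQ.
set B := A + A^T.
have eB : A + A^T - Q *m A *m Q - Q *m A^T *m Q = B - Q *m B *m Q.
  by rewrite /B mulmxDr mulmxDl opprD addrA.
have hB : B^T = B by rewrite /B linearD /= trmxK addrC.
rewrite eB; split; first split.
- by rewrite linearZ /= linearB /= !trmx_mul hQ hB mulmxA.
- rewrite -scalemxAl -scalemxAr -scalerDr mulmxBl mulmxBr.
  have e1 : Q *m B *m Q *m Q = Q *m B by rewrite -mulmxA hQQ mulmx1.
  have e2 : Q *m (Q *m B *m Q) = B *m Q by rewrite !mulmxA hQQ mul1mx.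
  rewrite e1 e2.
  have -> : B *m Q - Q *m B + (Q *m B - B *m Q) = 0 by rewrite addrA subrK subrr.
  by rewrite scaler0.
move=> X [hXt hX].
have eQX : Q *m X = - (X *m Q).
  by apply/eqP; rewrite -addr_eq0 addrC hX.
have t1 : \tr (Q *m B *m Q *m X) = - \tr (B *m X).
  rewrite -mulmxA eQX mulmxN linearN /= mulmxA mxtrace_mulC.
  by rewrite !mulmxA hQQ mul1mx.
rewrite -scalemxAl mxtraceZ mulmxBl linearB /= t1 /B mulmxDl linearD /=.
rewrite (@tr_symQ A X hXt); set t := \tr (A^T *m X).
lra.
Qed.

Lemma grad_unique A Q G1 G2 : is_riem_grad A Q G1 -> is_riem_grad A Q G2 -> G1 = G2.
Proof.
move=> [[h1t h1q] h1] [[h2t h2q] h2].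
set D := G1 - G2.
have hD : tangent_Gr Q D.
  split; first by rewrite /D linearB /= h1t h2t.
  rewrite /D mulmxBl mulmxBr.
  have -> : G1 *m Q - G2 *m Q + (Q *m G1 - Q *m G2) = (G1 *m Q + Q *m G1) - (G2 *m Q + Q *m G2).
    by rewrite opprD addrACA.
  by rewrite h1q h2q subrr.
have : \tr (D *m D^T) = 0.
  rewrite hD.1 {1}/D mulmxBl linearB /= h1 // h2 // subrr //.
by move/tr_zero/eqP; rewrite subr_eq0 => /eqP.
Qed.

Variable k : nat.
Hypothesis hkn : (k <= n)%N.
Let J := @Ikn R n k.
Let dd (i : 'I_n) : R := if (i < k)%N then 1 else -1.

Lemma J_sym : J^T = J.
Proof. by rewrite /J /Ikn tr_diag_mx. Qed.

Lemma J_sq : J *m J = 1%:M.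
Proof.
rewrite /J /Ikn mul_diag_mx; apply/matrixP => i j; rewrite !mxE.
case: eqVneq => [->|hij]; last by rewrite mulr0n mulr0.
by case: ifP => _; rewrite mulr1n ?mulr1 ?mulrNN ?mulr1.
Qed.

Lemma J_ii i : J i i = dd i.
Proof. by rewrite /J /Ikn !mxE eqxx mulr1n. Qed.

Lemma J_tr : \tr J = (2 * k)%:R - n%:R.
Proof.
rewrite /J /Ikn mxtrace_diag.
under eq_bigr => i _ do rewrite mxE.
rewrite -(big_mkord xpredT (fun i => if (i < k)%N then (1:R) else -1)).
rewrite (@big_cat_nat _ _ _ k 0 n _ _ (leq0n k) hkn) /=.
rewrite (@eq_big_nat _ _ _ 0 k _ (fun _ => 1)); last by move=> i /andP[_ ->].
rewrite (@eq_big_nat _ _ _ k n _ (fun _ => -1)); last first.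
  by move=> i /andP[h _]; rewrite ltnNge h.
rewrite !sumr_const_nat subn0 mulNrn natrM natrB //.
lra.
Qed.


Lemma sum_delta (F : 'I_n -> R) i : \sum_j F j * (delta_mx i (0 : 'I_1) j 0) ^+ 2 = F i.
Proof.
rewrite (bigD1 i) //= big1 => [|j hj]; rewrite mxE.
  by rewrite !eqxx /= expr1n mulr1 addr0.
by rewrite (negbTE hj) /= expr0n mulr0.
Qed.

Lemma spec_ge (lam : 'rV[R]_n) i : `|lam 0 i| <= spec_norm (diag_mx lam).
Proof.
set e : 'cV[R]_n := delta_mx i 0.
have he : vnorm e = 1.
  rewrite /vnorm -sqrtr1; congr Num.sqrt.
  by under eq_bigr => j _ do rewrite -[_ ^+ 2]mul1r; rewrite sum_delta.
have hv : vnorm (diag_mx lam *m e) = `|lam 0 i|.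
  rewrite /vnorm -sqrtr_sqr; congr Num.sqrt.
  under eq_bigr => j _ do rewrite mul_diag_mx mxE exprMn.
  by rewrite sum_delta.
rewrite /spec_norm; apply: sup_upper_bound; last by exists e; rewrite he hv.
split; first by exists `|lam 0 i|, e; rewrite he hv.
exists (Num.sqrt (\sum_j lam 0 j ^+ 2)) => r [x [hx ->]].
have hx2 : \sum_j x j 0 ^+ 2 <= 1.
  by move: hx; rewrite /vnorm -{1}sqrtr1 ler_sqrt // sqrtr1.
rewrite /vnorm ler_sqrt; last by apply: sumr_ge0 => j _; apply: sqr_ge0.
apply: ler_sum => j _; rewrite mul_diag_mx mxE exprMn.
apply: ler_piMr; first exact: sqr_ge0.
apply: le_trans hx2; rewrite (bigD1 j) //= lerDl.
by apply: sumr_ge0 => l _; apply: sqr_ge0.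
Qed.


Lemma frob_conj U Y (c : R) : U^T *m U = 1%:M ->
  frob_norm (c *: (U *m Y *m U^T)) ^+ 2 = c ^+ 2 * \tr (Y *m Y^T).
Proof.
move=> hU.
rewrite frob_norm_sq linearZ /= -scalemxAl -scalemxAr scalerA mxtraceZ expr2.
congr (_ * _).
rewrite !trmx_mul trmxK -!mulmxA (mulmxA U^T U) hU mul1mx mxtrace_mulC.
by rewrite -!mulmxA hU mulmx1.
Qed.

Lemma trYY (lam : 'rV[R]_n) M : M^T = M -> M *m M = 1%:M ->
  \tr ((diag_mx lam - M *m diag_mx lam *m M) *m (diag_mx lam - M *m diag_mx lam *m M)^T)
  = \sum_i \sum_j (lam 0 i * M i j - M i j * lam 0 j) ^+ 2.
Proof.
move=> hMs hMM.
set D := diag_mx lam.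
have eY : D - M *m D *m M = (D *m M - M *m D) *m M.
  by rewrite mulmxBl -[D *m M *m M]mulmxA hMM mulmx1.
rewrite eY trmx_mul hMs -mulmxA (mulmxA M M) hMM mul1mx -frob_sq.
apply: eq_bigr => i _; apply: eq_bigr => j _.
by rewrite /D mul_diag_mx mul_mx_diag !mxE.
Qed.

End Mat.
Unset Implicit Arguments.

Theorem lemma6p1 (R : realType) (n k : nat) (A U : 'M[R]_n) (lam : 'rV[R]_n) :
  (1 <= k <= n)%N ->
  orthogonal_mx U ->
  (forall i j : 'I_n, (i <= j)%N -> lam 0 j <= lam 0 i) ->
  2%:R^-1 *: (A + A^T) = U *m diag_mx lam *m U^T ->
  let gradf := fun Q : 'M[R]_n =>
    4%:R^-1 *: (A + A^T - Q *m A *m Q - Q *m A^T *m Q) in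
  let Qstar := U *m (@Ikn R n k) *m U^T in
  [/\ forall Q, in_Gr k Q -> forall G, is_riem_grad A Q G <-> G = gradf Q,
      in_Gr k Qstar,
      forall Q, in_Gr k Q -> fA A Q <= fA A Qstar
    & forall Q, in_Gr k Q ->
        frob_norm (gradf Q) ^+ 2 <= 2%:R * spec_norm (diag_mx lam) * (fA A Qstar - fA A Q)].
Proof.
move=> hk hU hsort hS gradf Qstar.
have hkn : (k <= n)%N by case/andP: hk.
have hUU : U *m U^T = 1%:M := mulmx1C hU.
set D := diag_mx lam in hS *.
set S := U *m D *m U^T in hS.
set J := @Ikn R n k in Qstar *.
have trD : forall M : 'M[R]_n, \tr (D *m M) = \sum_i lam 0 i * M i i.
  by move=> M; rewrite /mxtrace; apply: eq_bigr => i _; rewrite /D mul_diag_mx mxE.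
have fA_coord : forall Q : 'M[R]_n, Q^T = Q ->
    fA A Q = \sum_i lam 0 i * (U^T *m Q *m U) i i.
  move=> Q hQ.
  have fS : fA A Q = \tr (S *m Q).
    rewrite /fA -hS -scalemxAl mxtraceZ mulmxDl linearD /= (tr_symQ A hQ).
    set t := \tr (A^T *m Q); lra.
  rewrite fS /S -!mulmxA mxtrace_mulC -!mulmxA trD //.
have JU : U^T *m Qstar *m U = J.
  by rewrite /Qstar !mulmxA hU mul1mx -mulmxA hU mulmx1.
have Qs_sym : Qstar^T = Qstar.
  by rewrite /Qstar !trmx_mul trmxK J_sym mulmxA.
have fQs : fA A Qstar = \sum_(i : 'I_n) lam 0 i * (if (i < k)%N then 1 else -1).
  rewrite fA_coord // JU; apply: eq_bigr => i _; by rewrite J_ii.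
have GrQs : in_Gr k Qstar.
  split; [|exact: Qs_sym|].
  - rewrite /orthogonal_mx Qs_sym /Qstar -!mulmxA (mulmxA U^T U) hU mul1mx.
    by rewrite (mulmxA J J) J_sq mul1mx hUU.
  - by rewrite /Qstar mxtrace_mulC mulmxA hU mul1mx J_tr.
have QQ : forall Q : 'M[R]_n, in_Gr k Q -> Q *m Q = 1%:M.
  by move=> Q; rewrite /in_Gr => -[hQo hQs _]; rewrite -{1}hQs.
have coords : forall Q : 'M[R]_n, in_Gr k Q ->
   forall M : 'M[R]_n, M = U^T *m Q *m U ->
   [/\ M^T = M, M *m M = 1%:M,
       (forall i, \sum_j M i j ^+ 2 = 1), (forall j, \sum_i M i j ^+ 2 = 1)
     & \sum_(i : 'I_n) (if (i < k)%N then (1:R) else -1) = \sum_i M i i].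
  move=> Q; rewrite /in_Gr => -[hQo hQs hQt] M eM.
  have hQQ : Q *m Q = 1%:M by rewrite -{1}hQs.
  have hMs : M^T = M by rewrite eM !trmx_mul trmxK hQs mulmxA.
  have hMM : M *m M = 1%:M.
    rewrite eM -!mulmxA (mulmxA U U^T) hUU mul1mx (mulmxA Q Q) hQQ mul1mx hU //.
  split => //.
  - move=> i; move: (congr1 (fun X : 'M[R]_n => X i i) hMM).
    rewrite -{2}hMs !mxE eqxx mulr1n => <-; apply: eq_bigr => j _; by rewrite mxE expr2.
  - move=> j; move: (congr1 (fun X : 'M[R]_n => X j j) hMM).
    rewrite -{1}hMs !mxE eqxx mulr1n => <-; apply: eq_bigr => i _; by rewrite mxE expr2.
  - have -> : \sum_i M i i = \tr M by [].
    rewrite eM mxtrace_mulC mulmxA hUU mul1mx hQt -J_tr //.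
    by rewrite /mxtrace; apply: eq_bigr => i _; rewrite J_ii.
split => //.
- move=> Q hQ G; have hQQ := QQ Q hQ.
  have hQs : Q^T = Q by case: hQ.
  have hg := grad_ok A hQs hQQ.
  split; first by move=> hG; exact: grad_unique hG hg.
  by move=> ->.
- move=> Q hQ; have [hMs hMM hrow hcol htr] := coords Q hQ _ erefl.
  have hQs : Q^T = Q by case: hQ.
  rewrite fQs fA_coord // -subr_ge0 -sumrB.
  under eq_bigr => i _ do rewrite -mulrBr.
  exact: (gap_ge0 hk (fun i j => hsort i j) hrow htr).
move=> Q hQ; have [hMs hMM hrow hcol htr] := coords Q hQ _ erefl.
have hQs : Q^T = Q by case: hQ.
set M := U^T *m Q *m U in hMs hMM hrow hcol htr.
set s := spec_norm D.
have hs : forall i, `|lam 0 i| <= s by move=> i; exact: spec_ge.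
have eB : A + A^T - Q *m A *m Q - Q *m A^T *m Q = (A + A^T) - Q *m (A + A^T) *m Q.
  by rewrite mulmxDr mulmxDl opprD addrA.
have eB2 : A + A^T = 2%:R *: S.
  by rewrite -hS scalerA mulfV ?scale1r // pnatr_eq0.
have eS : S - Q *m S *m Q = U *m (D - M *m D *m M) *m U^T.
  rewrite mulmxBr mulmxBl; congr (_ - _).
  rewrite /M /S !mulmxA hUU mul1mx -!mulmxA hUU mulmx1 //.
have eG : gradf Q = 2%:R^-1 *: (U *m (D - M *m D *m M) *m U^T).
  rewrite /gradf eB eB2 -scalemxAr -scalemxAl -scalerBr scalerA eS.
  by congr (_ *: _); field.
rewrite eG frob_conj // trYY //.
rewrite fQs fA_coord // -sumrB.
under [X in _ <= _ * X]eq_bigr => i _ do rewrite -mulrBr.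
have := core_bound hk (fun i j => hsort i j) hs hrow hcol htr.
set F := \sum_i \sum_j _.
set G := \sum_i _.
move=> h.
have : 2%:R^-1 ^+ 2 * F <= 2%:R^-1 ^+ 2 * (8 * s * G).
  by apply: ler_wpM2l => //; apply: sqr_ge0.
have -> : (2%:R^-1 : R) ^+ 2 * (8 * s * G) = 2%:R * s * G by field; done.
done.
Qed.
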